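(* Let $G$ be a finite connected weighted graph with $N$ vertices and let $\lambda_{N-1}$ be the largest eigenvalue of its weighted Laplacian $L_w$. For any $S_0\subset V(G)$ with $S_0\cup b(S_0)=V(G)$, \[ \mathcal{N}\left[0,\ K_0(S_0)/2\right)\le|S_0|\quad\text{and}\quad\mathcal{N}\left[K_0(S_0)/2,\ \lambda_{N-1}\right]\ge N-|S_0|. \]
   Context: $G$ has vertex set $V(G)$ and symmetric weights $w\ge0$ with $w(u,u)=0$; $u\sim v$ iff $w(u,v)>0$; connected refers to this edge relation. $(L_wf)(v)=\sum_u(f(v)-f(u))w(v,u)$ on $\ell^2(G)$ (vertex weight $\nu\equiv1$). $\mathcal{N}I$ is the number of eigenvalues of $L_w$ in the interval $I$ counted with multiplicity. For $S\subset V(G)$: $cl(S)=S\cup\{v:\exists u\in S,\ u\sim v\}$ and $b(S)=cl(S)\setminus S$. $K_0(S_0)=\inf_{v\in b(S_0)}\sum_{u\in S_0}w(u,v)$. *)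

(* Defs.v *)
From HB Require Import structures.
From mathcomp Require Import all_boot all_order all_algebra.
From mathcomp Require Import all_classical all_reals ereal.
From mathcomp Require Import polyrcf.
Set Implicit Arguments. Unset Strict Implicit. Unset Printing Implicit Defensive.
Import Order.TTheory GRing.Theory Num.Theory.
Local Open Scope ring_scope.

Section Defs.
Variable R : realType.
Variable N : nat.
Variable w : 'I_N -> 'I_N -> R.

Definition adj : rel 'I_N := [rel u v | 0 < w u v].

Definition connected_graph : Prop := forall u v, connect adj u v.

(* matrix of (L_w f)(v) = sum_u (f v - f u) w(v,u) *)
Definition laplacian : 'M[R]_N :=
  \matrix_(v, u) ((v == u)%:R * (\sum_(x < N) w v x) - w v u).

Definition cl (S : {set 'I_N}) : {set 'I_N} :=
  S :|: [set v | [exists u in S, adj u v]].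
Definition bnd (S : {set 'I_N}) : {set 'I_N} := cl S :\: S.

(* K_0(S0) = inf_{v in b(S0)} sum_{u in S0} w(u,v), an extended real
   (= +oo when b(S0) is empty) *)
Definition K0 (S0 : {set 'I_N}) : \bar R :=
  ereal_inf [set (\sum_(u in S0) w u v)%:E | v in [set v | v \in bnd S0]].
End Defs.

Definition eig_count (R : realType) (n : nat) (A : 'M[R]_n) (P : pred R) : nat :=
  \sum_(x <- rootsR (char_poly A) | P x) mup x (char_poly A).

(* Largest eigenvalue (rootsR is sorted increasingly). *)
Definition lambda_max (R : realType) (n : nat) (A : 'M[R]_n) : R :=
  last 0 (rootsR (char_poly A)).

(* Main.v *)
Require Import Defs.
From HB Require Import structures.
From mathcomp Require Import all_boot all_order all_algebra.
From mathcomp Require Import all_classical all_reals ereal.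
From mathcomp Require Import polyrcf.
From mathcomp Require Import complex ring.
Import Order.TTheory GRing.Theory Num.Theory.
Local Open Scope ring_scope.
Set Implicit Arguments. Unset Strict Implicit.

Lemma char_poly_conj (F : fieldType) n (P A : 'M[F]_n) : P \in unitmx ->
  char_poly (invmx P *m A *m P) = char_poly A.
Proof.
move=> Pu; rewrite /char_poly /char_poly_mx.
set Pi := map_mx polyC (invmx P); set Pp := map_mx polyC P.
have PiPp : Pi *m Pp = 1%:M by rewrite -map_mxM mulVmx // map_mx1.
have -> : 'X%:M - map_mx polyC (invmx P *m A *m P) =
          Pi *m ('X%:M - map_mx polyC A) *m Pp.
  rewrite !map_mxM mulmxBr mulmxBl -/Pi -/Pp; congr (_ - _).
  by rewrite scalar_mxC -mulmxA PiPp mulmx1.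
rewrite !det_mulmx mulrC mulrA -det_mulmx.
by rewrite [Pp *m Pi]mulmx1C ?det1 ?mul1r // PiPp.
Qed.

Lemma sum_mup_prod (R : rcfType) (s : seq R) (Pd : pred R) :
  \sum_(x <- rootsR (\prod_(y <- s) ('X - y%:P)) | Pd x)
     mup x (\prod_(y <- s) ('X - y%:P)) = count Pd s.
Proof.
set p := \prod_(y <- s) _.
have pn0 : p != 0 by rewrite monic_neq0 // monic_prod_XsubC.
have eqr : rootsR p =i undup s.
  move=> x; rewrite mem_undup.
  have := roots_on_rootsR pn0 x; rewrite /= => <-.
  by rewrite root_prod_XsubC.
have pe : perm_eq (rootsR p) (undup s).
  by apply: uniq_perm => //; [exact: uniq_roots | exact: undup_uniq].
rewrite (perm_big _ pe) /=.
under eq_bigr do rewrite mu_prod_XsubC.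
rewrite -sum1_count -(big_undup_iterop_count _ _ _ (fun _ => 1%N)).
apply: eq_bigr => i _; case: (count_mem i s) => // n.
rewrite iteropS; elim: n => // n IH; by rewrite iterS IH.
Qed.

Section Spec.
Variable R : realType.
Variable N : nat.
Variable w : 'I_N -> 'I_N -> R.
Hypothesis w_sym : forall u v, w u v = w v u.

Definition Lc : 'M[R[i]]_N := map_mx (real_complex R) (laplacian w).

Lemma realC_real (x : R) : (x%:C)%C \is Num.real.
Proof.
rewrite realE ler0c; have [//|h] := lerP 0 x; rewrite orFb.
have := ltW h; rewrite -(lecR x 0); exact.
Qed.

Lemma Lc_real : Lc \is a realmx.
Proof. by apply/mxOverP => i j; rewrite mxE realC_real. Qed.

Lemma Lc_sym : Lc \is symmetricmx.
Proof.
apply/is_hermitianmxP; rewrite expr0 scale1r map_mx_id //.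
apply/matrixP => i j; rewrite !mxE eq_sym w_sym.
by case: eqP => [->|]; rewrite // !mulr0n !mul0r.
Qed.

Definition Pm := spectralmx Lc.
Definition dd := spectral_diag Lc.
Definition r (i : 'I_N) : R := complex.Re (dd 0 i).

Lemma Lc_eq : Lc = invmx Pm *m diag_mx dd *m Pm.
Proof. by apply/orthomx_spectralP; rewrite symmetric_normalmx ?Lc_sym ?Lc_real. Qed.

Lemma dd_real i : dd 0 i = ((r i)%:C)%C.
Proof.
have : dd 0 i \is Num.real.
  by have /mxOverP := hermitian_spectral_diag_real (realsym_hermsym Lc_sym Lc_real); apply.
rewrite /r; case: (dd 0 i) => a b /=; rewrite realE !lecE /= => /orP[]/andP[/eqP h _].
  by rewrite h.
by rewrite -h.
Qed.

Lemma charL : char_poly (laplacian w) = \prod_(i < N) ('X - (r i)%:P).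
Proof.
apply: (@map_poly_inj _ _ (real_complex R)).
rewrite map_char_poly -/Lc Lc_eq char_poly_conj ?spectral_unit //.
rewrite char_poly_trig ?diag_mx_is_trig // rmorph_prod; apply: eq_bigr => i _.
by rewrite rmorphB /= map_polyX map_polyC /= mxE eqxx mulr1n dd_real.
Qed.

Lemma eig_countE (Pd : pred R) :
  eig_count (laplacian w) Pd = #|[pred i | Pd (r i)]|.
Proof.
rewrite /eig_count charL.
have -> : \prod_(i < N) ('X - (r i)%:P) =
  \prod_(y <- [seq r i | i <- enum 'I_N]) ('X - y%:P) by rewrite big_map big_enum.
rewrite sum_mup_prod count_map cardE /enum_mem size_filter.
by rewrite (@eq_filter _ _ predT) // filter_predT.
Qed.
End Spec.

Section CD.
Local Open Scope sesquilinear_scope.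

Section Q.
Variable R : realType.
Variable N : nat.
Variable w : 'I_N -> 'I_N -> R.
Hypothesis w_sym : forall u v, w u v = w v u.
Local Notation C := R[i].
Local Notation W v u := ((w v u)%:C)%C.

Lemma QE (f : 'rV[C]_N) :
  (f *m Lc w *m f ^t*) 0 0 =
  \sum_(v < N) \sum_(u < N) f 0 v * Lc w v u * (f 0 u)^*.
Proof.
rewrite mxE exchange_big; apply: eq_bigr => u _ /=.
rewrite !mxE big_distrl /=; apply: eq_bigr => v _; by rewrite !mxE.
Qed.

Lemma Qid (f : 'rV[C]_N) :
  (f *m Lc w *m f ^t*) 0 0 *+ 2 =
  \sum_(v < N) \sum_(u < N) W v u * ((f 0 v - f 0 u) * (f 0 v - f 0 u)^*).
Proof.
rewrite QE.
set g := fun v => f 0 v.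
have LcE v u : Lc w v u = (v == u)%:R * (\sum_x W v x) - W v u.
  by rewrite mxE mxE rmorphB rmorphM rmorph_sum /= rmorph_nat.
under eq_bigr do under eq_bigr do rewrite LcE.
have E1 : \sum_(v < N) \sum_(u < N) W v u * (g u * (g u)^*) =
          \sum_(v < N) \sum_(u < N) W v u * (g v * (g v)^*).
  rewrite exchange_big; apply: eq_bigr => v _; apply: eq_bigr => u _.
  by rewrite w_sym.
have E2 : \sum_(v < N) \sum_(u < N) W v u * (g u * (g v)^*) =
          \sum_(v < N) \sum_(u < N) W v u * (g v * (g u)^*).
  rewrite exchange_big; apply: eq_bigr => v _; apply: eq_bigr => u _.
  by rewrite w_sym.
have -> : \sum_(v < N) \sum_(u < N) W v u * ((g v - g u) * (g v - g u)^*) =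
   (\sum_(v < N) \sum_(u < N) W v u * (g v * (g v)^*)) *+ 2
   - (\sum_(v < N) \sum_(u < N) W v u * (g v * (g u)^*)) *+ 2.
  rewrite !mulr2n -{2}E1 -{2}E2 -!big_split /= -!sumrB; apply: eq_bigr => v _.
  rewrite -!big_split /= -!sumrB; apply: eq_bigr => u _.
  rewrite rmorphB /=; ring.
rewrite -mulrnBl; congr (_ *+ 2).
rewrite -sumrB; apply: eq_bigr => v _.
under eq_bigr do rewrite mulrBr mulrBl.
rewrite sumrB; congr (_ - _); last by apply: eq_bigr => u _; rewrite /g; ring.
have delta (F : 'I_N -> C) : \sum_(u < N) (v == u)%:R * F u = F v.
  rewrite (bigD1 v) //= eqxx mul1r big1 ?addr0 // => u.
  by rewrite eq_sym => /negbTE ->; rewrite mul0r.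
rewrite (eq_bigr (fun u => (v == u)%:R * (f 0 v * (\sum_x W v x) * (f 0 u)^*))); last first.
  by move=> u _; ring.
rewrite delta.
rewrite big_distrr big_distrl /=; apply: eq_bigr => u _; rewrite /g; ring.
Qed.
End Q.

Section Q2.
Variable R : realType.
Variable N : nat.
Variable w : 'I_N -> 'I_N -> R.
Hypothesis w_sym : forall u v, w u v = w v u.
Local Notation C := R[i].

Lemma trC_mul (a : 'rV[C]_N) (M : 'M[C]_N) : (a *m M)^t* = M^t* *m a^t*.
Proof. by rewrite trmx_mul map_mxM. Qed.

Lemma Q_spec (a : 'rV[C]_N) :
  ((a *m Pm w) *m Lc w *m (a *m Pm w)^t*) 0 0 =
     \sum_j ((r w j)%:C)%C * (a 0 j * (a 0 j)^*).
Proof.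
have U := spectral_unitarymx (Lc w).
rewrite (Lc_eq w_sym) invmx_unitary // trC_mul.
rewrite -/(Pm w) !mulmxA mulmxtVK // -!mulmxA [Pm w *m (_ *m _)]mulmxA.
rewrite (unitarymxP U) mul1mx mulmxA mxE; apply: eq_bigr => j _.
by rewrite mul_mx_diag !mxE (dd_real w_sym) mulrCA mulrA.
Qed.

Lemma N_spec (a : 'rV[C]_N) :
  ((a *m Pm w) *m (a *m Pm w)^t*) 0 0 = \sum_j a 0 j * (a 0 j)^*.
Proof.
have U := spectral_unitarymx (Lc w).
rewrite trC_mul mulmxA mulmxtVK // mxE; apply: eq_bigr => j _; by rewrite !mxE.
Qed.

Lemma N_row (f : 'rV[C]_N) : (f *m f^t*) 0 0 = \sum_j f 0 j * (f 0 j)^*.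
Proof. by rewrite mxE; apply: eq_bigr => j _; rewrite !mxE. Qed.
End Q2.

Section Q3.
Variable R : realType.
Variable N : nat.
Variable w : 'I_N -> 'I_N -> R.
Hypothesis w_sym : forall u v, w u v = w v u.
Hypothesis w_ge0 : forall u v, 0 <= w u v.
Local Notation C := R[i].
Local Notation W v u := ((w v u)%:C)%C.

Lemma Wge0 v u : 0 <= W v u.
Proof. by rewrite ler0c. Qed.

Lemma Q_ge0 (f : 'rV[C]_N) : 0 <= (f *m Lc w *m f^t*) 0 0.
Proof.
rewrite -(pmulrn_lge0 _ (isT : (0 < 2)%N)) (Qid w_sym).
apply: sumr_ge0 => v _; apply: sumr_ge0 => u _.
by apply: mulr_ge0; [exact: Wge0 | exact: mul_conjC_ge0].
Qed.

Lemma r_ge0 j : 0 <= r w j.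
Proof.
have := Q_ge0 (delta_mx 0 j *m Pm w); rewrite (Q_spec w_sym).
rewrite (bigD1 j) //= big1 ?addr0; last first.
  by move=> k kj; rewrite mxE (negbTE kj) andbF mul0r mulr0.
by rewrite mxE !eqxx /= conjC1 !mulr1 ler0c.
Qed.

Lemma Q_bound (S0 : {set 'I_N}) (f : 'rV[C]_N) :
  (forall u, u \in S0 -> f 0 u = 0) ->
  \sum_(v | v \notin S0) ((\sum_(u in S0) w u v)%:C)%C * (f 0 v * (f 0 v)^*)
    <= (f *m Lc w *m f^t*) 0 0.
Proof.
move=> fS0.
have H2 (x y : C) : x *+ 2 <= y *+ 2 -> x <= y by rewrite lerMn2r.
apply: H2; rewrite (Qid w_sym).
set T := fun v u => W v u * ((f 0 v - f 0 u) * (f 0 v - f 0 u)^*).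
have T0 v u : 0 <= T v u by apply: mulr_ge0; [exact: Wge0 | exact: mul_conjC_ge0].
rewrite [X in _ <= X](bigID (mem S0)) /= mulr2n addrC.
apply: lerD.
  apply: (@le_trans _ _ (\sum_(v | v \notin S0) \sum_(u in S0) T v u)).
    rewrite le_eqVlt; apply/orP; left; apply/eqP; apply: eq_bigr => v vS.
    rewrite rmorph_sum big_distrl /=; apply: eq_bigr => u uS.
    by rewrite /T (fS0 u uS) subr0 w_sym.
  apply: ler_sum => v _; rewrite [X in _ <= X](bigID (mem S0)) /= -[X in X <= _]addr0.
  apply: lerD; first exact: lexx.
  by apply/sumr_ge0 => i _; apply: T0.
apply: (@le_trans _ _ (\sum_(v in S0) \sum_(u | u \notin S0) T v u)).
  rewrite exchange_big /= le_eqVlt; apply/orP; left; apply/eqP; apply: eq_bigr => u uS.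
  rewrite rmorph_sum big_distrl /=; apply: eq_bigr => v vS.
  by rewrite /T (fS0 v vS) sub0r rmorphN mulrNN.
apply: ler_sum => v _; rewrite [X in _ <= X](bigID (mem S0)) /= -[X in X <= _]add0r.
apply: lerD; last exact: lexx.
by apply/sumr_ge0 => i _; apply: T0.
Qed.
End Q3.

Lemma rowsub_unitary (C : numClosedFieldType) m n (g : 'I_m -> 'I_n) (M : 'M[C]_n) :
  injective g -> M \is unitarymx -> rowsub g M \is unitarymx.
Proof.
move=> ginj /unitarymxP MU; apply/unitarymxP/matrixP => i j.
rewrite [RHS]mxE -(inj_eq ginj).
have := congr1 (fun X : 'M[C]_n => X (g i) (g j)) MU; rewrite /= [RHS]mxE => <-.
rewrite !mxE; apply: eq_bigr => k _; by rewrite !mxE.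
Qed.

Lemma exists_nz_row (C : fieldType) m n (M : 'M[C]_(m, n)) : M != 0 ->
  exists i, row i M != 0.
Proof.
move=> Mn0; case: (pickP (fun i => row i M != 0)) => [i Hi|H]; first by exists i.
case/negP: Mn0; apply/eqP/row_matrixP => i; rewrite row0.
by move: (H i) => /negbFE/eqP.
Qed.

Lemma exists_nz_entry (C : fieldType) n (f : 'rV[C]_n) : f != 0 ->
  exists j, f 0 j != 0.
Proof.
move=> fn0; case: (pickP (fun j => f 0 j != 0)) => [j Hj|H]; first by exists j.
case/negP: fn0; apply/eqP/rowP => j; rewrite mxE.
by move: (H j) => /negbFE/eqP.
Qed.

Section Main.
Variable R : realType.
Variable N : nat.
Variable w : 'I_N -> 'I_N -> R.
Hypothesis w_sym : forall u v, w u v = w v u.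
Hypothesis w_ge0 : forall u v, 0 <= w u v.
Local Notation C := R[i].

Lemma small_count (S0 Sm : {set 'I_N}) :
  (forall j v, j \in Sm -> v \notin S0 -> r w j < \sum_(u in S0) w u v) ->
  (#|Sm| <= #|S0|)%N.
Proof.
move=> Hsm; rewrite leqNgt; apply/negP => Hlt.
pose g := (@enum_val _ (mem Sm)) : 'I_#|Sm| -> 'I_N.
pose h := (@enum_val _ (mem (~: S0))) : 'I_#|~: S0| -> 'I_N.
pose U := rowsub g (Pm w).
pose V := rowsub h (1%:M : 'M[C]_N).
have UU : U \is unitarymx.
  by apply: rowsub_unitary; [exact: enum_val_inj | exact: spectral_unitarymx].
have VU : V \is unitarymx.
  apply: rowsub_unitary; first exact: enum_val_inj.
  by apply/unitarymxP; rewrite trmx1 map_mx1 mulmx1.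
have rU := mxrank_unitary UU; have rV := mxrank_unitary VU.
have := mxrank_sum_cap U V; rewrite rU rV.
have := rank_leq_col (U + V)%MS.
have cS0 : (#|S0| + #|~: S0| = N)%N by rewrite cardsC card_ord.
move=> le1 eq1.
have : (\rank (U :&: V)%MS != 0)%N.
  apply/eqP => e; rewrite e addn0 in eq1; move: le1; rewrite eq1 => le2.
  have : (#|Sm| + #|~: S0| <= #|S0| + #|~: S0|)%N by rewrite cS0.
  by rewrite leq_add2r leqNgt Hlt.
rewrite mxrank_eq0 => /exists_nz_row [i0 Hi0].
set f := row i0 (U :&: V)%MS in Hi0.
have : (f <= U :&: V)%MS by exact: row_sub.
rewrite sub_capmx => /andP[/submxP[D fD] /submxP[D' fD']].
pose a := D *m rowsub g 1%:M.
have fa : f = a *m Pm w by rewrite fD /U rowsubE mulmxA.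
have a0 j : j \notin Sm -> a 0 j = 0.
  move=> jS; rewrite mxE big1 // => k _; rewrite !mxE.
  have : g k \in Sm by exact: enum_valP.
  case: eqP => [e|_ _]; last by rewrite mulr0.
  by rewrite e (negbTE jS).
have f0 u : u \in S0 -> f 0 u = 0.
  move=> uS; rewrite fD' mxE big1 // => k _; rewrite !mxE.
  have : h k \in ~: S0 by exact: enum_valP.
  case: eqP => [e|_ _]; last by rewrite mulr0.
  by rewrite e inE uS.
have [j1 j1S] : exists j, j \in Sm.
  apply/set0Pn; rewrite -card_gt0; exact: leq_ltn_trans (leq0n _) Hlt.
have [j0 j0S j0max] := arg_maxP (r w) (j1S : mem Sm j1).
set c := r w _ in j0max.
have Qf := Q_bound w_sym w_ge0 f0.
have Qa : (f *m Lc w *m f^t*) 0 0 = \sum_j ((r w j)%:C)%C * (a 0 j * (a 0 j)^*).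
  by rewrite fa (Q_spec w_sym).
have Na : \sum_v f 0 v * (f 0 v)^* = \sum_j a 0 j * (a 0 j)^*.
  by rewrite -N_row fa N_spec.
have up : (f *m Lc w *m f^t*) 0 0 <= (c%:C)%C * \sum_v f 0 v * (f 0 v)^*.
  rewrite Qa Na mulr_sumr; apply: ler_sum => j _; case: (boolP (j \in Sm)) => jS.
    by apply: ler_wpM2r; [exact: mul_conjC_ge0 | rewrite lecR; exact: j0max].
  by rewrite a0 // mul0r !mulr0.
have NS : \sum_v f 0 v * (f 0 v)^* = \sum_(v | v \notin S0) f 0 v * (f 0 v)^*.
  rewrite (bigID (mem S0)) /= big1 ?add0r // => v vS.
  by rewrite f0 // mul0r.
have := le_trans Qf up; rewrite NS mulr_sumr -subr_le0 -sumrB.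
under eq_bigr do rewrite -mulrBl.
have [v0 fv0] := exists_nz_entry Hi0.
have v0S : v0 \notin S0 by apply/negP => /f0 e; move: fv0; rewrite e eqxx.
rewrite (bigD1 v0) //=.
set rest := \sum_(i | (i \notin S0) && (i != v0)) _.
have rest0 : 0 <= rest.
  apply: sumr_ge0 => v /andP[vS _]; apply: mulr_ge0; last exact: mul_conjC_ge0.
  rewrite -rmorphB ler0c subr_ge0; apply: ltW; exact: Hsm.
have t0 : 0 < ((\sum_(u in S0) w u v0)%:C)%C - (c%:C)%C.
  rewrite -rmorphB ltcR subr_gt0; exact: Hsm.
move=> H.
have : 0 < (((\sum_(u in S0) w u v0)%:C)%C - (c%:C)%C) * (f 0 v0 * (f 0 v0)^*) + rest.
  rewrite -[0]addr0; apply: ltr_leD => //.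
  by apply: mulr_gt0; rewrite // mul_conjC_gt0.
by move=> /lt_le_trans/(_ H); rewrite ltxx.
Qed.
End Main.

End CD.

Lemma le_last_sorted (R : realDomainType) (y : R) s :
  path <%R y s -> forall x, x \in y :: s -> x <= last y s.
Proof.
elim: s y => [|z s IH] y /=.
  by move=> _ x; rewrite inE => /eqP ->.
move=> /andP[yz pz] x; rewrite inE => /orP[/eqP ->|xin].
  by apply: le_trans (ltW yz) _; apply: IH => //; rewrite inE eqxx.
exact: IH.
Qed.

Lemma r_le_max (R : realType) N (w : 'I_N -> 'I_N -> R)
  (w_sym : forall u v, w u v = w v u) i :
  r w i <= lambda_max (laplacian w).
Proof.
have rt : root (char_poly (laplacian w)) (r w i).
  rewrite (charL w_sym); apply/rootP; rewrite horner_prod (bigD1 i) //=.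
  by rewrite hornerXsubC subrr mul0r.
have pn0 : char_poly (laplacian w) != 0 by rewrite monic_neq0 // char_poly_monic.
have inr : r w i \in rootsR (char_poly (laplacian w)).
  by have := roots_on_rootsR pn0 (r w i); rewrite /= rt => <-.
rewrite /lambda_max; move: inr.
have : sorted <%R (rootsR (char_poly (laplacian w))) by exact: sorted_roots.
case: (rootsR _) => [//|y s] /= ps xin.
exact: le_last_sorted.
Qed.


Unset Implicit Arguments. Set Strict Implicit.
Theorem corollary3p4 (R : realType) (N : nat) (w : 'I_N -> 'I_N -> R)
  (hN : (0 < N)%N)
  (w_ge0 : forall u v, 0 <= w u v)
  (w_sym : forall u v, w u v = w v u)
  (w_diag : forall u, w u u = 0)
  (hconn : connected_graph w)
  (S0 : {set 'I_N})
  (hcover : S0 :|: bnd w S0 = [set: 'I_N]) :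
  (eig_count (laplacian w)
     (fun x : R => ((0 <= x) && (x%:E < K0 w S0 * (2^-1)%:E)%E)%R)
     <= #|S0|)%N /\
  (N - #|S0| <=
   eig_count (laplacian w)
     (fun x : R => ((K0 w S0 * (2^-1)%:E <= x%:E)%E && (x <= lambda_max (laplacian w)))%R))%N.
Proof.
have bndE v : v \notin S0 -> v \in bnd w S0.
  move=> vS; have : v \in [set: 'I_N] by rewrite inE.
  by rewrite -hcover inE (negbTE vS).
have K0lb v : v \notin S0 -> (K0 w S0 <= (\sum_(u in S0) w u v)%:E)%E.
  move=> vS; apply: ereal_inf_lbound; exists v => //; exact: bndE.
have K0ge0 : (0 <= K0 w S0)%E.
  apply/ereal_infP => y [v _ <-]; rewrite lee_fin; exact: sumr_ge0.
have Khalf : (K0 w S0 * (2^-1)%:E <= K0 w S0)%E.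
  rewrite muleC gee_pMl // lee_fin invf_le1 ?ler1n //.
set k := (K0 w S0 * (2^-1)%:E)%E.
have small : (#|[set i | (0 <= r w i)%R && ((r w i)%:E < k)%E]| <= #|S0|)%N.
  apply: small_count => // j v; rewrite inE => /andP[_ hj] vS.
  by have := lt_le_trans hj (le_trans Khalf (K0lb v vS)); rewrite lte_fin.
rewrite !(eig_countE w_sym).
have E1 : #|[pred i | (0 <= r w i) && ((r w i)%:E < k)%E]| =
          #|[set i | (0 <= r w i) && ((r w i)%:E < k)%E]|.
  by apply: eq_card => i; rewrite inE.
split; first by rewrite E1.
have E2 : #|[pred i | (k <= (r w i)%:E)%E && (r w i <= lambda_max (laplacian w))]| =
          #|[predC [pred i | (0 <= r w i) && ((r w i)%:E < k)%E]]|.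
  apply: eq_card => i; rewrite !inE r_ge0 ?r_le_max // andbT /= leNgt.
  by [].
rewrite E2.
have := cardC [pred i | (0 <= r w i) && ((r w i)%:E < k)%E].
rewrite card_ord E1 => eN.
have gen (n a b c : nat) : (a + b = n -> a <= c -> n - c <= b)%N.
  by move=> <- ac; rewrite leq_subLR leq_add2r.
exact: gen eN small.
Qed.
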